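(* Assume $0<A,B\le1$ and $B\ge B_0(A)$, and let $U$ satisfy $G_{A,B}(U)=0$ and $L(A,B)\le U\le R(A,B)$. Then \[ (A+B)(1-U)+B\kappa M(U)+A\varepsilon N(U)\ge\tfrac12\sqrt{2(1+AB)} \] and \[ (A+B)U+B\kappa M(U)+A\varepsilon N(U)\ge\tfrac12\sqrt{2(1+AB)} . \]
   Context: For $0<A,B\le1$ put $\kappa=\sqrt{1-A^2}$, $\varepsilon=\sqrt{1-B^2}$, $P=P(A,B)=\frac{1+AB}{B(A+B)}$, $M(U)=\kappa(P-U)$, $N(U)=\varepsilon\left(U+\frac{\kappa^2}{A(A+B)}\right)$, and $G_{A,B}(U)=B\cos(\pi M(U))-A\cos(\pi N(U))-(A+B)\cos(\pi U)$. Further $L(A,B)=\frac{\kappa}{1+\kappa}\frac{1+AB}{B(A+B)}$, $R(A,B)=\frac{1-\varepsilon\kappa^2/[A(A+B)]}{1+\varepsilon}$, and $B_0(A)=\frac{-A(1-\kappa)+\sqrt{A^2(1-\kappa)^2+8\kappa(1+\kappa)}}{2(1+\kappa)}$. *)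

(* Defs.v *)
From Stdlib Require Import Reals Lra.
Open Scope R_scope.

Definition kap (A : R) : R := sqrt (1 - A^2).
Definition eps (B : R) : R := sqrt (1 - B^2).
Definition Pf (A B : R) : R := (1 + A*B) / (B * (A + B)).
Definition Mf (A B U : R) : R := kap A * (Pf A B - U).
Definition Nf (A B U : R) : R := eps B * (U + (kap A)^2 / (A * (A + B))).
Definition G (A B U : R) : R :=
  B * cos (PI * Mf A B U) - A * cos (PI * Nf A B U) - (A + B) * cos (PI * U).
Definition Lf (A B : R) : R :=
  kap A / (1 + kap A) * ((1 + A*B) / (B * (A + B))).
Definition Rf (A B : R) : R :=
  (1 - eps B * (kap A)^2 / (A * (A + B))) / (1 + eps B).
Definition B0 (A : R) : R :=
  (- A * (1 - kap A) + sqrt (A^2 * (1 - kap A)^2 + 8 * kap A * (1 + kap A)))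
  / (2 * (1 + kap A)).

(* Main.v *)
Require Import Defs.
From Stdlib Require Import Reals Lra Psatz ZArith List.
Open Scope R_scope.

Definition kb : Z := 20%Z.
Definition SZ : Z := Eval vm_compute in (2 ^ kb)%Z.
Definition SR : R := IZR SZ.
Lemma SR_pos : 0 < SR.
Proof. unfold SR. apply IZR_lt. vm_compute. reflexivity. Qed.
Definition D (m : Z) : R := IZR m / SR.

Definition flo (p : Z) : Z := Z.shiftr p kb.
Definition cei (p : Z) : Z := (- flo (- p))%Z.

Lemma flo_le p : IZR (flo p) * SR <= IZR p.
Proof.
  unfold flo, SR. rewrite Z.shiftr_div_pow2 by (vm_compute; discriminate).
  rewrite <- mult_IZR. apply IZR_le. fold SZ.
  rewrite Z.mul_comm. apply Z.mul_div_le. vm_compute. reflexivity.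
Qed.
Lemma cei_ge p : IZR p <= IZR (cei p) * SR.
Proof.
  unfold cei. pose proof (flo_le (- p)) as H. rewrite opp_IZR in H. rewrite opp_IZR. lra.
Qed.
Lemma flo_D p : D (flo p) <= IZR p / (SR * SR).
Proof.
  unfold D. pose proof (flo_le p). pose proof SR_pos.
  apply Rmult_le_reg_r with (SR*SR). nra. field_simplify; try lra; try nra.
Qed.
Lemma cei_D p : IZR p / (SR * SR) <= D (cei p).
Proof.
  unfold D. pose proof (cei_ge p). pose proof SR_pos.
  apply Rmult_le_reg_r with (SR*SR). nra. field_simplify; try lra; try nra.
Qed.
Lemma D_mul x y : D x * D y = IZR (x * y) / (SR * SR).
Proof. unfold D. rewrite mult_IZR. pose proof SR_pos. field. lra. Qed.

Definition itv := (Z * Z)%type.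
Definition inI (x : R) (i : itv) : Prop := D (fst i) <= x <= D (snd i).

Definition iadd (i j : itv) : itv := (fst i + fst j, snd i + snd j)%Z.
Definition isub (i j : itv) : itv := (fst i - snd j, snd i - fst j)%Z.
Definition imul (i j : itv) : itv :=
  let a := fst i in let b := snd i in let c := fst j in let d := snd j in
  let p1 := (a*c)%Z in let p2 := (a*d)%Z in let p3 := (b*c)%Z in let p4 := (b*d)%Z in
  (flo (Z.min (Z.min p1 p2) (Z.min p3 p4)), cei (Z.max (Z.max p1 p2) (Z.max p3 p4))).
Definition iinv (j : itv) : option itv :=
  if Z.ltb 0 (fst j) then Some (((SZ*SZ) / snd j)%Z, (- ((- (SZ*SZ)) / fst j))%Z) else None.
Definition isq (i : itv) : itv :=
  let a := fst i in let b := snd i in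
  if Z.leb 0 a then (flo (a*a), cei (b*b))
  else if Z.leb b 0 then (flo (b*b), cei (a*a))
  else (0%Z, cei (Z.max (a*a) (b*b))).

Lemma D_add x y : D (x + y) = D x + D y.
Proof. unfold D. rewrite plus_IZR. field. pose proof SR_pos; lra. Qed.
Lemma D_sub x y : D (x - y) = D x - D y.
Proof. unfold D. rewrite minus_IZR. field. pose proof SR_pos; lra. Qed.
Lemma D_le x y : (x <= y)%Z -> D x <= D y.
Proof. intros H. unfold D. apply IZR_le in H. pose proof SR_pos.
  apply Rmult_le_compat_r; [left; apply Rinv_0_lt_compat; lra|lra]. Qed.
Lemma D_lt x y : (x < y)%Z -> D x < D y.
Proof. intros H. unfold D. apply IZR_lt in H. pose proof SR_pos.
  apply Rmult_lt_compat_r; [apply Rinv_0_lt_compat; lra|lra]. Qed.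
Lemma D_0 : D 0 = 0.
Proof. unfold D. simpl. unfold Rdiv. ring. Qed.

Lemma iadd_ok x y i j : inI x i -> inI y j -> inI (x+y) (iadd i j).
Proof. unfold inI, iadd; simpl; intros [] []. rewrite !D_add. lra. Qed.
Lemma isub_ok x y i j : inI x i -> inI y j -> inI (x-y) (isub i j).
Proof. unfold inI, isub; simpl; intros [] []. rewrite !D_sub. lra. Qed.

Lemma corner_lo x y a b c d : a <= x <= b -> c <= y <= d ->
  a*c <= x*y \/ a*d <= x*y \/ b*c <= x*y \/ b*d <= x*y.
Proof.
  intros [] [].
  destruct (Rle_dec 0 x); destruct (Rle_dec 0 c); destruct (Rle_dec 0 d).
  all: try (left; nra); try (right; left; nra); try (right; right; left; nra); try (right; right; right; nra).
Qed.
Lemma corner_hi x y a b c d : a <= x <= b -> c <= y <= d ->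
  x*y <= a*c \/ x*y <= a*d \/ x*y <= b*c \/ x*y <= b*d.
Proof.
  intros [] [].
  destruct (Rle_dec 0 x); destruct (Rle_dec 0 c); destruct (Rle_dec 0 d).
  all: try (left; nra); try (right; left; nra); try (right; right; left; nra); try (right; right; right; nra).
Qed.

Lemma Zmin_R a b : IZR (Z.min a b) <= IZR a /\ IZR (Z.min a b) <= IZR b.
Proof. split; apply IZR_le; lia. Qed.
Lemma Zmax_R a b : IZR a <= IZR (Z.max a b) /\ IZR b <= IZR (Z.max a b).
Proof. split; apply IZR_le; lia. Qed.

Lemma imul_ok x y i j : inI x i -> inI y j -> inI (x*y) (imul i j).
Proof.
  unfold inI, imul; simpl; intros Hx Hy.
  set (a := fst i) in *; set (b := snd i) in *; set (c := fst j) in *; set (d := snd j) in *.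
  pose proof SR_pos as HS. assert (HS2 : 0 < SR * SR) by nra.
  split.
  - eapply Rle_trans; [apply flo_D|].
    destruct (Zmin_R (Z.min (a*c) (a*d)) (Z.min (b*c) (b*d))).
    destruct (Zmin_R (a*c) (a*d)); destruct (Zmin_R (b*c) (b*d)).
    pose proof (D_mul a c); pose proof (D_mul a d); pose proof (D_mul b c); pose proof (D_mul b d).
    set (m := Z.min (Z.min (a*c) (a*d)) (Z.min (b*c) (b*d))) in *.
    assert (forall u, IZR m <= IZR u -> IZR m / (SR*SR) <= IZR u / (SR*SR)) as Hm.
    { intros u Hu. apply Rmult_le_compat_r; [left; apply Rinv_0_lt_compat; lra|lra]. }
    destruct (corner_lo _ _ _ _ _ _ Hx Hy) as [|[|[|]]].
    + eapply Rle_trans; [apply Hm with (u := (a*c)%Z); lra|]. lra.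
    + eapply Rle_trans; [apply Hm with (u := (a*d)%Z); lra|]. lra.
    + eapply Rle_trans; [apply Hm with (u := (b*c)%Z); lra|]. lra.
    + eapply Rle_trans; [apply Hm with (u := (b*d)%Z); lra|]. lra.
  - eapply Rle_trans; [|apply cei_D].
    destruct (Zmax_R (Z.max (a*c) (a*d)) (Z.max (b*c) (b*d))).
    destruct (Zmax_R (a*c) (a*d)); destruct (Zmax_R (b*c) (b*d)).
    pose proof (D_mul a c); pose proof (D_mul a d); pose proof (D_mul b c); pose proof (D_mul b d).
    set (m := Z.max (Z.max (a*c) (a*d)) (Z.max (b*c) (b*d))) in *.
    assert (forall u, IZR u <= IZR m -> IZR u / (SR*SR) <= IZR m / (SR*SR)) as Hm.
    { intros u Hu. apply Rmult_le_compat_r; [left; apply Rinv_0_lt_compat; lra|lra]. }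
    destruct (corner_hi _ _ _ _ _ _ Hx Hy) as [|[|[|]]].
    + eapply Rle_trans; [|apply Hm with (u := (a*c)%Z); lra]. lra.
    + eapply Rle_trans; [|apply Hm with (u := (a*d)%Z); lra]. lra.
    + eapply Rle_trans; [|apply Hm with (u := (b*c)%Z); lra]. lra.
    + eapply Rle_trans; [|apply Hm with (u := (b*d)%Z); lra]. lra.
Qed.

Lemma inv_lo q d S : 0 < S -> 0 < d -> d * q <= S * S -> q / S <= / (d / S).
Proof.
  intros HS Hd H. assert (E : q / S - / (d / S) = (d * q - S * S) / (S * d)) by (field; lra).
  assert ((d * q - S * S) / (S * d) <= 0).
  { unfold Rdiv. assert (0 < / (S*d)) by (apply Rinv_0_lt_compat; nra). nra. }
  lra.
Qed.
Lemma inv_hi u c S : 0 < S -> 0 < c -> S * S <= c * u -> / (c / S) <= u / S.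
Proof.
  intros HS Hc H. assert (E : u / S - / (c / S) = (c * u - S * S) / (S * c)) by (field; lra).
  assert (0 <= (c * u - S * S) / (S * c)).
  { unfold Rdiv. assert (0 < / (S*c)) by (apply Rinv_0_lt_compat; nra). nra. }
  lra.
Qed.

Lemma iinv_ok y j k : inI y j -> iinv j = Some k -> inI (/ y) k /\ 0 < y.
Proof.
  unfold inI, iinv; intros [H1 H2] E.
  destruct (Z.ltb 0 (fst j)) eqn:Hq; [|discriminate]. injection E as <-.
  set (q := (- (SZ * SZ) / fst j)%Z).
  apply Z.ltb_lt in Hq. cbn [fst snd].
  set (c := fst j) in *; set (d := snd j) in *.
  pose proof SR_pos as HS.
  assert (Hc : 0 < D c) by (rewrite <- D_0; apply D_lt; auto).
  assert (Hy : 0 < y) by lra.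
  assert (Hd : 0 < D d) by lra.
  assert (Hdz : (0 < d)%Z). { apply lt_IZR. unfold D in Hd. apply Rmult_lt_reg_r with (/SR).
    apply Rinv_0_lt_compat; lra. rewrite Rmult_0_l. exact Hd. }
  split; [split|lra].
  - apply Rle_trans with (/ D d); [|apply Rinv_le_contravar; lra].
    pose proof (Z.mul_div_le (SZ*SZ) d Hdz) as Hm. apply IZR_le in Hm.
    rewrite mult_IZR in Hm. rewrite mult_IZR in Hm. fold SR in Hm.
    unfold D. apply inv_lo; auto. apply IZR_lt in Hdz. exact Hdz.
  - apply Rle_trans with (/ D c); [apply Rinv_le_contravar; lra|].
    pose proof (Z.mul_div_le (- (SZ*SZ)) c Hq) as Hm. fold q in Hm. apply IZR_le in Hm.
    rewrite mult_IZR, opp_IZR, mult_IZR in Hm. fold SR in Hm.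
    unfold D. apply inv_hi; auto. apply IZR_lt in Hq. exact Hq.
    assert (Hqq : (-1099511627776 / c)%Z = q) by reflexivity. rewrite Hqq. rewrite opp_IZR. replace (IZR c * - IZR q) with (- (IZR c * IZR q)) by ring. lra.
Qed.

Lemma isq_ok x i : inI x i -> inI (x*x) (isq i).
Proof.
  unfold inI, isq; intros [H1 H2].
  pose proof SR_pos as HS. assert (HS2 : 0 < SR * SR) by nra.
  set (a := fst i) in *; set (b := snd i) in *.
  destruct (Z.leb 0 a) eqn:E1.
  { apply Z.leb_le in E1. apply D_le in E1. rewrite D_0 in E1. simpl.
    pose proof (flo_D (a*a)); pose proof (cei_D (b*b)). rewrite <- !D_mul in *. split; nra. }
  destruct (Z.leb b 0) eqn:E2.
  { apply Z.leb_le in E2. apply D_le in E2. rewrite D_0 in E2. simpl.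
    pose proof (flo_D (b*b)); pose proof (cei_D (a*a)). rewrite <- !D_mul in *. split; nra. }
  simpl. rewrite D_0. split; [nra|].
  eapply Rle_trans; [|apply cei_D].
  destruct (Zmax_R (a*a) (b*b)).
  assert (D a * D a <= IZR (Z.max (a * a) (b * b)) / (SR * SR) /\ D b * D b <= IZR (Z.max (a * a) (b * b)) / (SR * SR)) as [].
  { rewrite !D_mul. split; apply Rmult_le_compat_r; try lra; left; apply Rinv_0_lt_compat; lra. }
  destruct (Rle_dec 0 x); nra.
Qed.

Inductive ex : Type :=
| EA | EB | EP | EC (z : Z)
| Eadd (x y : ex) | Esub (x y : ex) | Emul (x y : ex) | Ediv (x y : ex) | Esq (x : ex).

Fixpoint ev (A B p : R) (e : ex) : R :=
  match e with
  | EA => A | EB => B | EP => p | EC z => IZR z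
  | Eadd x y => ev A B p x + ev A B p y
  | Esub x y => ev A B p x - ev A B p y
  | Emul x y => ev A B p x * ev A B p y
  | Ediv x y => ev A B p x / ev A B p y
  | Esq x => ev A B p x * ev A B p x
  end.

Fixpoint iev (bA bB bP : itv) (e : ex) : option itv :=
  match e with
  | EA => Some bA | EB => Some bB | EP => Some bP | EC z => Some ((z*SZ)%Z, (z*SZ)%Z)
  | Eadd x y => match iev bA bB bP x, iev bA bB bP y with Some i, Some j => Some (iadd i j) | _, _ => None end
  | Esub x y => match iev bA bB bP x, iev bA bB bP y with Some i, Some j => Some (isub i j) | _, _ => None end
  | Emul x y => match iev bA bB bP x, iev bA bB bP y with Some i, Some j => Some (imul i j) | _, _ => None end
  | Ediv x y => match iev bA bB bP x, iev bA bB bP y with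
                | Some i, Some j => match iinv j with Some k => Some (imul i k) | None => None end
                | _, _ => None end
  | Esq x => match iev bA bB bP x with Some i => Some (isq i) | None => None end
  end.

Lemma D_cst z : D (z * SZ) = IZR z.
Proof. unfold D. rewrite mult_IZR. fold SR. field. pose proof SR_pos; lra. Qed.

Lemma iev_ok A B p bA bB bP : inI A bA -> inI B bB -> inI p bP ->
  forall e i, iev bA bB bP e = Some i -> inI (ev A B p e) i.
Proof.
  intros HA HB HP e. induction e; intros i E; simpl in *.
  - injection E as <-; auto.
  - injection E as <-; auto.
  - injection E as <-; auto.
  - injection E as <-; unfold inI; simpl; rewrite D_cst; lra.
  - destruct (iev bA bB bP e1), (iev bA bB bP e2); try discriminate. injection E as <-. apply iadd_ok; auto.
  - destruct (iev bA bB bP e1), (iev bA bB bP e2); try discriminate. injection E as <-. apply isub_ok; auto.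
  - destruct (iev bA bB bP e1), (iev bA bB bP e2); try discriminate. injection E as <-. apply imul_ok; auto.
  - destruct (iev bA bB bP e1) as [i1|], (iev bA bB bP e2) as [i2|]; try discriminate.
    destruct (iinv i2) as [k|] eqn:Ek; try discriminate. injection E as <-.
    destruct (iinv_ok _ _ _ (IHe2 i2 eq_refl) Ek). unfold Rdiv. apply imul_ok; auto.
  - destruct (iev bA bB bP e); try discriminate. injection E as <-. apply isq_ok; auto.
Qed.

Definition atom := (ex * bool)%type.
Definition atom_ok bA bB bP (a : atom) : bool :=
  match iev bA bB bP (fst a) with
  | Some i => if snd a then Z.ltb 0 (fst i) else Z.leb 0 (fst i)
  | None => false
  end.
Definition atom_holds A B p (a : atom) : Prop :=
  if snd a then 0 < ev A B p (fst a) else 0 <= ev A B p (fst a).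
Fixpoint conjP A B p (l : list atom) : Prop :=
  match l with nil => True | a :: r => atom_holds A B p a /\ conjP A B p r end.
Fixpoint disjP A B p (s : list (list atom)) : Prop :=
  match s with nil => False | c :: r => conjP A B p c \/ disjP A B p r end.

Fixpoint conj_ok bA bB bP (l : list atom) : bool :=
  match l with nil => true | a :: r => if atom_ok bA bB bP a then conj_ok bA bB bP r else false end.
Fixpoint spec_ok bA bB bP (s : list (list atom)) : bool :=
  match s with nil => false | c :: r => if conj_ok bA bB bP c then true else spec_ok bA bB bP r end.

Lemma atom_ok_sound A B p bA bB bP a : inI A bA -> inI B bB -> inI p bP ->
  atom_ok bA bB bP a = true -> atom_holds A B p a.
Proof.
  intros HA HB HP. unfold atom_ok, atom_holds.
  destruct (iev bA bB bP (fst a)) as [i|] eqn:E; [|discriminate].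
  pose proof (iev_ok _ _ _ _ _ _ HA HB HP _ _ E) as [H1 H2].
  destruct (snd a); intros H.
  - apply Z.ltb_lt in H. apply D_lt in H. rewrite D_0 in H. lra.
  - apply Z.leb_le in H. apply D_le in H. rewrite D_0 in H. lra.
Qed.

Lemma spec_ok_sound A B p bA bB bP s : inI A bA -> inI B bB -> inI p bP ->
  spec_ok bA bB bP s = true -> disjP A B p s.
Proof.
  intros HA HB HP. induction s as [|c r IH]; simpl; [discriminate|].
  destruct (conj_ok bA bB bP c) eqn:Hc; intros H; [left|right; auto].
  clear IH H. induction c as [|a c IHc]; simpl in *; auto.
  destruct (atom_ok bA bB bP a) eqn:Ha; [|discriminate].
  split; auto. eapply atom_ok_sound; eauto.
Qed.

Definition mid (i : itv) : Z := Z.shiftr (fst i + snd i) 1.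

Fixpoint chk (bP : itv) (s : list (list atom)) (n : nat) (bA bB : itv) : bool :=
  if spec_ok bA bB bP s then true else
  match n with
  | O => false
  | S n' =>
    if Z.leb (snd bB - fst bB) (snd bA - fst bA)
    then (if chk bP s n' (fst bA, mid bA) bB then chk bP s n' (mid bA, snd bA) bB else false)
    else (if chk bP s n' bA (fst bB, mid bB) then chk bP s n' bA (mid bB, snd bB) else false)
  end.

Lemma chk_sound bP s n : forall bA bB A B p, inI A bA -> inI B bB -> inI p bP ->
  chk bP s n bA bB = true -> disjP A B p s.
Proof.
  induction n as [|n IH]; intros bA bB A B p HA HB HP; simpl.
  - destruct (spec_ok bA bB bP s) eqn:E; [|discriminate]. intros _. eapply spec_ok_sound; eauto.
  - destruct (spec_ok bA bB bP s) eqn:E. { intros _. eapply spec_ok_sound; eauto. }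
    intros H.
    destruct (Z.leb _ _).
    all: match type of H with (if ?c then ?d else false) = true => destruct c eqn:H1; [rename H into H2|discriminate] end.
    + destruct (Rle_dec A (D (mid bA))).
      * apply (IH (fst bA, mid bA) bB A B p); auto. unfold inI in *; simpl; lra.
      * apply (IH (mid bA, snd bA) bB A B p); auto. unfold inI in *; simpl; lra.
    + destruct (Rle_dec B (D (mid bB))).
      * apply (IH bA (fst bB, mid bB) A B p); auto. unfold inI in *; simpl; lra.
      * apply (IH bA (mid bB, snd bB) A B p); auto. unfold inI in *; simpl; lra.
Qed.


Lemma sin_lb3 x : 0 <= x <= PI -> x - x^3/6 <= sin x.
Proof.
  intros [H1 H2]. destruct (SIN x H1 H2) as [H _].
  unfold sin_lb, sin_approx, sin_term in H. cbn [sum_f_R0] in H.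
  rewrite !INR_IZR_INZ in H. cbn in H.
  assert (PI <= 4) by apply PI_4.
  assert (0 <= x^5 * (42 - x^2)) by (apply Rmult_le_pos; [apply pow_le; lra| nra]).
  nra.
Qed.

Lemma cos_bnds x : 0 <= x <= PI/2 ->
  1 - x^2/2 + x^4/24 - x^6/720 <= cos x <= 1 - x^2/2 + x^4/24.
Proof.
  intros [H1 H2]. assert (H0 : - PI / 2 <= x) by (pose proof PI_RGT_0; lra).
  destruct (COS x H0 H2) as [Hl Hu].
  unfold cos_lb, cos_ub, cos_approx, cos_term in Hl, Hu. cbn [sum_f_R0 Nat.mul Nat.add] in Hl, Hu.
  assert (E8 : INR (fact 8) = 40320) by (rewrite INR_IZR_INZ; f_equal).
  assert (E6 : INR (fact 6) = 720) by (rewrite INR_IZR_INZ; f_equal).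
  assert (E4 : INR (fact 4) = 24) by (rewrite INR_IZR_INZ; f_equal).
  assert (E2 : INR (fact 2) = 2) by (rewrite INR_IZR_INZ; f_equal).
  assert (E0 : INR (fact 0) = 1) by (rewrite INR_IZR_INZ; f_equal).
  rewrite E8, E6, E4, E2, E0 in Hu. rewrite E6, E4, E2, E0 in Hl. cbn [pow] in Hl, Hu.
  assert (PI <= 4) by apply PI_4.
  assert (0 <= x^6 * (56 - x^2)) by (apply Rmult_le_pos; [apply pow_le; lra| nra]).
  split; nra.
Qed.

Lemma PI_bounds : 314/100 <= PI <= 315/100.
Proof.
  destruct (PI_2_3_7_ineq 1) as [H1 H2].
  unfold PI_2_3_7_tg, tg_alt, Ratan_seq in H1, H2. cbn [sum_f_R0 Nat.mul Nat.add] in H1, H2.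
  cbn [INR pow] in H1, H2.
  split; lra.
Qed.

Definition eS : ex := (Eadd EA EB).
Definition eD : ex := (Esub EA EB).
Definition eAB : ex := (Emul EA EB).
Definition eC1 : ex := (Esub (Emul (EC (2)) EB) (Emul eAB eD)).
Definition eNET : ex := (Esub (Esub (EC (8)) (Emul (Emul (EC (4)) (Esq eD)) (Eadd (EC (1)) (Ediv eAB (EC (2)))))) (Emul (Eadd (EC (3)) eAB) eS)).
Definition eW : ex := (Ediv eNET (Emul (Emul (EC (4)) eS) eC1)).
Definition eZ : ex := (Emul EP eW).
Definition eLHS : ex := (Emul (Emul eS eZ) (Esub (EC (1)) (Ediv (Esq eZ) (EC (6))))).
Definition eQb : ex := (Ediv (Esq (Esub (Eadd (EC (2)) eAB) (Esq EB))) (Emul (Emul (EC (4)) (Esq EB)) (Esq eS))).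
Definition eQa : ex := (Ediv (Esq (Esub (Eadd (EC (2)) eAB) (Esq EA))) (Emul (Emul (EC (4)) (Esq EA)) (Esq eS))).
Definition eX : ex := (Emul (Emul (Esq EP) (Esub (EC (1)) (Esq EA))) eQb).
Definition eY : ex := (Emul (Emul (Esq EP) (Esub (EC (1)) (Esq EB))) eQa).
Definition eDup : ex := (Esub (Emul EA (Eadd (Esub (EC (1)) (Ediv eY (EC (2)))) (Ediv (Esq eY) (EC (24))))) (Emul EB (Esub (Eadd (Esub (EC (1)) (Ediv eX (EC (2)))) (Ediv (Esq eX) (EC (24)))) (Ediv (Emul eX (Esq eX)) (EC (720)))))).
Definition eG : ex := (Esub (Eadd (Eadd (Eadd (EC (4)) (Emul (EC (4)) eAB)) (Emul (EC (4)) (Esq eAB))) (Emul (Emul (EC (2)) eAB) (Esq eAB))) (Emul (Eadd (Esq EA) (Esq EB)) (Esq (Eadd (EC (2)) eAB)))).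
Definition eSkip : ex := (Esub (Emul (EC (2)) eNET) (Emul (Emul (EC (4)) eS) eC1)).
Definition eCrude : ex := (Esub eLHS EA).
Definition eFull : ex := (Esub eLHS eDup).
Definition ea : ex := (Esub (EC (1)) EA).
Definition eb : ex := (Esub (EC (1)) EB).
Definition eXh : ex := (Emul (Emul (Esq EP) (Esub (EC (2)) ea)) eQb).
Definition eYh : ex := (Emul (Emul (Esq EP) (Esub (EC (2)) eb)) eQa).
Definition eNa : ex := (Esub (Eadd (Esub (Esub (EC (6)) (Eadd ea eb)) eb) (Emul ea eb)) (Emul (Emul (EC (4)) (Esub ea eb)) (Eadd (EC (1)) (Ediv eAB (EC (2)))))).
Definition eNb : ex := (Esub (Eadd (Esub (Esub (EC (6)) (Eadd ea eb)) ea) (Emul ea eb)) (Emul (Emul (EC (4)) (Esub eb ea)) (Eadd (EC (1)) (Ediv eAB (EC (2)))))).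
Definition eF : ex := (Ediv (Esub (EC (1)) (Ediv (Esq eZ) (EC (6)))) (Emul (EC (4)) eC1)).
Definition ePa : ex := (Esub (Eadd (Esub (Eadd (Emul (Emul EP eNa) eF) (EC (1))) (Ediv (Emul EB eXh) (EC (2)))) (Ediv (Emul (Emul EB ea) (Esq eXh)) (EC (24)))) (Ediv (Emul (Emul (Emul EB (Esq ea)) eXh) (Esq eXh)) (EC (720)))).
Definition ePb : ex := (Esub (Eadd (Esub (Emul (Emul EP eNb) eF) (EC (1))) (Ediv (Emul EA eYh) (EC (2)))) (Ediv (Emul (Emul EA eb) (Esq eYh)) (EC (24)))).
Definition SPEC1 : list (list atom) := (((eG, true) :: nil) :: ((eSkip, false) :: nil) :: ((eCrude, false) :: nil) :: ((eFull, false) :: nil) :: ((ePa, false) :: (ePb, false) :: nil) :: nil).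
Definition SPEC2 : list (list atom) := (((eNET, false) :: nil) :: ((eNa, false) :: (eNb, false) :: nil) :: nil).


Definition PINT : itv := (3292528%Z, 3303015%Z).
Definition BOX01 : itv := (0%Z, SZ).
Lemma chk2 : chk PINT SPEC2 20 BOX01 BOX01 = true.
Proof. vm_compute. reflexivity. Qed.
Lemma chk1 : chk PINT SPEC1 30 BOX01 BOX01 = true.
Proof. vm_compute. reflexivity. Qed.

Lemma D_SZ : D SZ = 1.
Proof. unfold D, SR. field. apply not_0_IZR. vm_compute. discriminate. Qed.

Lemma box_ok x : 0 <= x <= 1 -> inI x BOX01.
Proof. intros. unfold inI, BOX01; simpl. rewrite D_0, D_SZ. lra. Qed.

Lemma pi_ok : inI PI PINT.
Proof. unfold inI, PINT, D, SR, SZ; simpl. pose proof PI_bounds. lra. Qed.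

Lemma spec1_holds A B : 0 <= A <= 1 -> 0 <= B <= 1 -> disjP A B PI SPEC1.
Proof. intros. eapply chk_sound; [apply box_ok; auto|apply box_ok; auto|apply pi_ok|apply chk1]. Qed.
Lemma spec2_holds A B : 0 <= A <= 1 -> 0 <= B <= 1 -> disjP A B PI SPEC2.
Proof. intros. eapply chk_sound; [apply box_ok; auto|apply box_ok; auto|apply pi_ok|apply chk2]. Qed.


Lemma kap_sq A : 0 < A <= 1 -> kap A ^ 2 = 1 - A^2.
Proof. intros. unfold kap. apply pow2_sqrt. nra. Qed.
Lemma eps_sq B : 0 < B <= 1 -> eps B ^ 2 = 1 - B^2.
Proof. intros. unfold eps. apply pow2_sqrt. nra. Qed.
Lemma kap_nn A : 0 <= kap A.
Proof. apply sqrt_pos. Qed.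
Lemma eps_nn B : 0 <= eps B.
Proof. apply sqrt_pos. Qed.

Lemma div_nn a b : 0 <= a -> 0 < b -> 0 <= a / b.
Proof. intros. unfold Rdiv. apply Rmult_le_pos; auto. left. apply Rinv_0_lt_compat; auto. Qed.

Lemma half_aux m k x : 0 < k -> m * k = x -> 0 <= x <= k/2 -> 0 <= m <= 1/2.
Proof.
  intros Hk E Hx. assert (m = x / k) by (rewrite <- E; field; lra). subst m.
  split; [apply div_nn; lra|].
  apply Rmult_le_reg_r with k; auto. unfold Rdiv. rewrite Rmult_assoc, Rinv_l by lra. lra.
Qed.

Definition M0 A B := kap A * (2 + A*B - B^2) / (2*B*(A+B)).
Definition N0 A B := eps B * (2 + A*B - A^2) / (2*A*(A+B)).

Lemma evG A B p : ev A B p eG = (1 - A^2) * (2 + A*B - B^2)^2 - B^2*(A+B)^2.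
Proof. unfold eG, eAB. cbn [ev]. ring. Qed.
Lemma evG' A B p : ev A B p eG = (1 - B^2) * (2 + A*B - A^2)^2 - A^2*(A+B)^2.
Proof. unfold eG, eAB. cbn [ev]. ring. Qed.

Lemma M0_bnd A B : 0 < A <= 1 -> 0 < B <= 1 -> ev A B PI eG <= 0 -> 0 <= M0 A B <= 1/2.
Proof.
  intros HA HB Hg. rewrite evG in Hg. pose proof (kap_sq A HA). pose proof (kap_nn A).
  set (x := kap A * (2 + A*B - B^2)).
  assert (Hx : 0 <= x) by (unfold x; apply Rmult_le_pos; nra).
  assert (Hsq : x^2 <= (B*(A+B))^2) by (unfold x; rewrite Rpow_mult_distr, H; nra).
  assert (Hxb : x <= B*(A+B)). { destruct (Rle_dec x (B*(A+B))) as [h|h]; [exact h|]. exfalso. assert (0 < x - B*(A+B)) by lra. assert (0 < x + B*(A+B)) by nra. assert (0 < (x - B*(A+B))*(x + B*(A+B))) by (apply Rmult_lt_0_compat; lra). nra. }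
  assert (E : M0 A B * (2*B*(A+B)) = x) by (unfold M0, x; field; lra).
  apply (half_aux _ (2*B*(A+B)) x); auto; nra.
Qed.

Lemma N0_bnd A B : 0 < A <= 1 -> 0 < B <= 1 -> ev A B PI eG <= 0 -> 0 <= N0 A B <= 1/2.
Proof.
  intros HA HB Hg. rewrite evG' in Hg. pose proof (eps_sq B HB). pose proof (eps_nn B).
  set (x := eps B * (2 + A*B - A^2)).
  assert (Hx : 0 <= x) by (unfold x; apply Rmult_le_pos; nra).
  assert (Hsq : x^2 <= (A*(A+B))^2) by (unfold x; rewrite Rpow_mult_distr, H; nra).
  assert (Hxb : x <= A*(A+B)). { destruct (Rle_dec x (A*(A+B))) as [h|h]; [exact h|]. exfalso. assert (0 < x - A*(A+B)) by lra. assert (0 < x + A*(A+B)) by nra. assert (0 < (x - A*(A+B))*(x + A*(A+B))) by (apply Rmult_lt_0_compat; lra). nra. }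
  assert (E : N0 A B * (2*A*(A+B)) = x) by (unfold N0, x; field; lra).
  apply (half_aux _ (2*A*(A+B)) x); auto; nra.
Qed.

Lemma evX A B : 0 < A <= 1 -> 0 < B <= 1 -> (PI * M0 A B)^2 = ev A B PI eX.
Proof.
  intros HA HB. unfold M0, eX, eQb, eAB, eS. cbn [ev].
  replace ((PI * (kap A * (2 + A * B - B ^ 2) / (2 * B * (A + B)))) ^ 2)
    with (PI^2 * kap A ^ 2 * (2 + A * B - B ^ 2)^2 / (2 * B * (A + B))^2) by (field; lra).
  rewrite kap_sq by auto. field. lra.
Qed.
Lemma evY A B : 0 < A <= 1 -> 0 < B <= 1 -> (PI * N0 A B)^2 = ev A B PI eY.
Proof.
  intros HA HB. unfold N0, eY, eQa, eAB, eS. cbn [ev].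
  replace ((PI * (eps B * (2 + A * B - A ^ 2) / (2 * A * (A + B)))) ^ 2)
    with (PI^2 * eps B ^ 2 * (2 + A * B - A ^ 2)^2 / (2 * A * (A + B))^2) by (field; lra).
  rewrite eps_sq by auto. field. lra.
Qed.

Lemma cos_bnds' x : 0 <= x <= PI/2 ->
  1 - x^2/2 + x^2*x^2/24 - x^2*(x^2*x^2)/720 <= cos x <= 1 - x^2/2 + x^2*x^2/24.
Proof.
  intros H. destruct (cos_bnds x H). split.
  - replace (x^2*x^2) with (x^4) by ring. replace (x^2*(x^2*x^2)) with (x^6) by ring. lra.
  - replace (x^2*x^2) with (x^4) by ring. lra.
Qed.

Lemma NET_nn A B : 0 < A <= 1 -> 0 < B <= 1 -> 0 <= ev A B PI eNET.
Proof.
  intros HA HB. destruct (spec2_holds A B) as [[H _]|[[H1 [H2 _]]|[]]]; try lra.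
  - exact H.
  - cbn [atom_holds fst snd] in H1, H2.
    assert (E : ev A B PI eNET = (1-A) * ev A B PI eNa + (1-B) * ev A B PI eNb)
      by (unfold eNET, eNa, eNb, ea, eb, eAB, eD, eS; cbn [ev]; field).
    rewrite E. apply Rplus_le_le_0_compat; apply Rmult_le_pos; lra.
Qed.

Lemma C1_pos A B : 0 < A <= 1 -> 0 < B <= 1 -> 0 < ev A B PI eC1.
Proof. intros. unfold eC1, eAB, eD. cbn [ev]. replace (2 * B - A * B * (A - B)) with (B * (2 - A*A + A*B)) by ring. apply Rmult_lt_0_compat; nra. Qed.

Lemma key A B v : 0 < A <= 1 -> 0 < B <= 1 -> ev A B PI eG <= 0 -> 0 <= v <= 1/2 ->
  (A+B) * sin (PI*v) <= A * cos (PI * N0 A B) - B * cos (PI * M0 A B) ->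
  ev A B PI eC1 * v <= ev A B PI eNET / (4*(A+B)).
Proof.
  intros HA HB Hg Hv Hs.
  pose proof PI_bounds as Hpi.
  pose proof (M0_bnd A B HA HB Hg) as HM. pose proof (N0_bnd A B HA HB Hg) as HN.
  pose proof (NET_nn A B HA HB) as Hnet. pose proof (C1_pos A B HA HB) as Hc1.
  set (c1 := ev A B PI eC1) in *. set (NET := ev A B PI eNET) in *.
  assert (Hw : ev A B PI eW = NET / (4*(A+B)*c1)) by reflexivity.
  set (w := ev A B PI eW) in *.
  assert (Hw0 : 0 <= w) by (rewrite Hw; apply div_nn; nra).
  destruct (Rle_dec v w) as [Hvw|Hvw].
  { assert (c1 * w = NET / (4*(A+B))) by (rewrite Hw; field; lra). nra. }
  exfalso.
  assert (Hz : ev A B PI eZ = PI * w) by reflexivity.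
  set (z := ev A B PI eZ) in *.
  assert (Hz0 : 0 <= z) by nra.
  assert (Hz1 : z < PI * v) by nra.
  assert (Hsz : sin z < sin (PI * v)).
  { apply sin_increasing_1; nra. }
  assert (Hsl : z - z^3/6 <= sin z) by (apply sin_lb3; nra).
  assert (HL : ev A B PI eLHS = (A+B) * z * (1 - z*z/6)) by reflexivity.
  set (LHS := ev A B PI eLHS) in *.
  assert (HLt : LHS < A * cos (PI * N0 A B) - B * cos (PI * M0 A B)).
  { assert (LHS = (A+B) * (z - z^3/6)) by (rewrite HL; simpl; field). nra. }
  assert (HcM : 0 <= cos (PI * M0 A B)) by (apply cos_ge_0; nra).
  assert (HcN : cos (PI * N0 A B) <= 1) by apply COS_bound.
  assert (Hcrude : LHS < A) by nra.
  destruct (cos_bnds' (PI * M0 A B)) as [HMl _]; [nra|].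
  destruct (cos_bnds' (PI * N0 A B)) as [_ HNu]; [nra|].
  rewrite (evX A B HA HB) in HMl. rewrite (evY A B HA HB) in HNu.
  assert (HD : ev A B PI eDup = A * (1 - ev A B PI eY / 2 + ev A B PI eY * ev A B PI eY / 24)
     - B * (1 - ev A B PI eX / 2 + ev A B PI eX * ev A B PI eX / 24 - ev A B PI eX * (ev A B PI eX * ev A B PI eX) / 720))
     by reflexivity.
  assert (Hfull : LHS < ev A B PI eDup).
  { rewrite HD. nra. }
  destruct (spec1_holds A B) as [[H _]|[[H _]|[[H _]|[[H _]|[[H1 [H2 _]]|[]]]]]]; try lra;
    cbn [atom_holds fst snd] in *.
  - lra.
  -
    assert (ev A B PI eSkip = 2*NET - 4*(A+B)*c1) by reflexivity.
    assert (E : w - 1/2 = ev A B PI eSkip / (8*(A+B)*c1)).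
    { rewrite Hw. match goal with H : ev A B PI eSkip = _ |- _ => rewrite H end. field. split; lra. }
    assert (0 <= ev A B PI eSkip / (8*(A+B)*c1)) by (apply div_nn; nra).
    lra.
  - assert (ev A B PI eCrude = LHS - A) by reflexivity. lra.
  - assert (ev A B PI eFull = LHS - ev A B PI eDup) by reflexivity. lra.
  - assert (E : ev A B PI eFull = (1-A) * ev A B PI ePa + (1-B) * ev A B PI ePb).
    { unfold eFull, ePa, ePb, eLHS, eDup, eF, eZ, eW, eNET, eNa, eNb, eXh, eYh, eX, eY, eQa, eQb, ea, eb, eC1, eAB, eD, eS.
      cbn [ev]. assert (Hc1x : 0 < 2*B - A*B*(A-B)) by exact Hc1. field. repeat split; lra. }
    assert (ev A B PI eFull = LHS - ev A B PI eDup) by reflexivity.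
    assert (0 <= (1-A) * ev A B PI ePa + (1-B) * ev A B PI ePb)
      by (apply Rplus_le_le_0_compat; apply Rmult_le_pos; lra).
    lra.
Qed.


Lemma cos_le_dec x y : 0 <= x -> x <= y -> y <= PI -> cos y <= cos x.
Proof.
  intros. destruct (Req_dec x y) as [->|Hn]; [lra|].
  left. apply cos_decreasing_1; lra.
Qed.

Lemma cos_plus_PI2 x : cos (x + PI/2) = - sin x.
Proof. rewrite cos_plus, cos_PI2, sin_PI2. ring. Qed.

Lemma N0_swap A B : 0 < A <= 1 -> 0 < B <= 1 -> N0 B A = M0 A B.
Proof. intros. unfold N0, M0, eps, kap. field. lra. Qed.
Lemma M0_swap A B : 0 < A <= 1 -> 0 < B <= 1 -> M0 B A = N0 A B.
Proof. intros. unfold N0, M0, eps, kap. field. lra. Qed.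

Lemma G_swap A B p : ev B A p eG = ev A B p eG.
Proof. rewrite evG, evG'. ring. Qed.
Lemma NET_swap A B p : ev B A p eNET = ev A B p eNET.
Proof. unfold eNET, eAB, eD, eS. cbn [ev]. field. Qed.

Lemma HL_of_B0 A B : 0 < A <= 1 -> 0 < B <= 1 -> B0 A <= B ->
  kap A * (2 + A*B - B^2) <= B * (A + B).
Proof.
  intros HA HB H. unfold B0 in H.
  pose proof (kap_sq A HA) as Hk2. pose proof (kap_nn A) as Hk0.
  set (k := kap A) in *.
  assert (Hk1 : k <= 1) by nra.
  set (Dq := A ^ 2 * (1 - k) ^ 2 + 8 * k * (1 + k)) in *.
  assert (HD0 : 0 <= Dq) by (unfold Dq; nra).
  pose proof (pow2_sqrt Dq HD0) as Hs2. pose proof (sqrt_pos Dq) as Hs0.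
  set (sq := sqrt Dq) in *.
  assert (H1 : sq <= 2*(1+k)*B + A*(1-k)).
  { apply Rmult_le_compat_r with (r := 2*(1+k)) in H; [|lra].
    unfold Rdiv in H. rewrite Rmult_assoc, Rinv_l in H by lra. lra. }
  assert (H2 : Dq <= (2*(1+k)*B + A*(1-k))^2).
  { rewrite <- Hs2. apply pow_incr. lra. }
  unfold Dq in H2.
  assert (E3 : (2*(1+k)*B + A*(1-k))^2 - (A ^ 2 * (1 - k) ^ 2 + 8 * k * (1 + k))
     = 4*(1+k) * ((1+k)*B^2 + A*B*(1-k)) - 4*(1+k) * (2*k)) by ring.
  assert (H3 : 4*(1+k) * (2*k) <= 4*(1+k) * ((1+k)*B^2 + A*B*(1-k))) by lra.
  assert (H4 : 2*k <= (1+k)*B^2 + A*B*(1-k)).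
  { apply Rmult_le_reg_l with (4*(1+k)); lra. }
  nra.
Qed.

Lemma sqrt_bound A B : 0 < A <= 1 -> 0 < B <= 1 -> / 2 * sqrt (2 * (1 + A * B)) <= (3 + A*B)/4.
Proof.
  intros. assert (sqrt (2 * (1 + A * B)) <= (3 + A*B)/2).
  { rewrite <- (sqrt_pow2 ((3 + A*B)/2)) by nra. apply sqrt_le_1_alt. assert (((3 + A*B)/2)^2 - 2 * (1 + A * B) = (1 - A*B)^2/4) by field. assert (0 <= (1 - A*B)^2) by apply pow2_ge_0. lra. }
  lra.
Qed.

Theorem mainTheorem9 (A B U : R) :
  0 < A <= 1 -> 0 < B <= 1 -> B0 A <= B ->
  G A B U = 0 -> Lf A B <= U <= Rf A B ->
  (A + B) * (1 - U) + B * kap A * Mf A B U + A * eps B * Nf A B U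
    >= / 2 * sqrt (2 * (1 + A * B)) /\
  (A + B) * U + B * kap A * Mf A B U + A * eps B * Nf A B U
    >= / 2 * sqrt (2 * (1 + A * B)).
Proof.
  intros HA HB HB0 HG [HUL HUR].
  pose proof (kap_sq A HA) as Hk2. pose proof (kap_nn A) as Hk0.
  pose proof (eps_sq B HB) as He2. pose proof (eps_nn B) as He0.
  pose proof PI_bounds as Hpi.
  pose proof (HL_of_B0 A B HA HB HB0) as HLL.
  assert (Hg : ev A B PI eG <= 0).
  { rewrite evG. rewrite <- Hk2.
    assert (0 <= kap A * (2 + A*B - B^2)) by (apply Rmult_le_pos; nra).
    assert ((kap A * (2 + A*B - B^2))^2 <= (B*(A+B))^2) by (apply pow_incr; lra).
    nra. }
  pose proof (M0_bnd A B HA HB Hg) as HM. pose proof (N0_bnd A B HA HB Hg) as HN.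
  pose proof (NET_nn A B HA HB) as Hnet.
  pose proof (C1_pos A B HA HB) as Hc1. pose proof (C1_pos B A HB HA) as Hc2.
  pose proof (sqrt_bound A B HA HB) as Ht.
  assert (EM : Mf A B U = M0 A B - kap A * (U - 1/2)).
  { unfold Mf, Pf, M0. field. lra. }
  assert (EN : Nf A B U = N0 A B + eps B * (U - 1/2)).
  { unfold Nf, N0. rewrite Hk2. field. lra. }
  assert (HPf : 1 <= Pf A B).
  { unfold Pf. apply Rmult_le_reg_r with (B*(A+B)); [nra|].
    unfold Rdiv. rewrite Rmult_assoc, Rinv_l by nra. nra. }
  assert (HMU : Mf A B U <= U).
  { unfold Lf in HUL. unfold Mf. 
    assert (HUL' : kap A * Pf A B <= U * (1 + kap A)).
    { apply Rmult_le_compat_r with (r := 1 + kap A) in HUL; [|lra].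
      replace (kap A / (1 + kap A) * ((1 + A * B) / (B * (A + B))) * (1 + kap A)) with (kap A * Pf A B) in HUL
        by (unfold Pf; field; split; nra). lra. }
    nra. }
  assert (HNU : Nf A B U <= 1 - U).
  { unfold Rf in HUR. unfold Nf.
    apply Rmult_le_compat_r with (r := 1 + eps B) in HUR; [|lra].
    replace ((1 - eps B * kap A ^ 2 / (A * (A + B))) / (1 + eps B) * (1 + eps B))
      with (1 - eps B * kap A ^ 2 / (A * (A + B))) in HUR by (field; lra).
    lra. }
  assert (HU0 : 0 <= U).
  { unfold Lf in HUL. assert (0 <= kap A / (1 + kap A) * ((1 + A * B) / (B * (A + B)))).
    { apply Rmult_le_pos; apply div_nn; nra. } lra. }
  assert (HN0' : 0 <= Nf A B U).
  { unfold Nf. apply Rmult_le_pos; auto. assert (0 <= kap A ^ 2 / (A * (A + B))) by (apply div_nn; nra). lra. }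
  assert (HU1 : U <= 1) by lra.
  assert (HM0' : 0 <= Mf A B U) by (unfold Mf; apply Rmult_le_pos; lra).
  assert (ET1 : (A + B) * (1 - U) + B * kap A * Mf A B U + A * eps B * Nf A B U
     = (3 + A*B)/4 + ev A B PI eNET / (4*(A+B)) - ev A B PI eC1 * (U - 1/2)).
  { replace (B * kap A * Mf A B U) with (B * kap A ^ 2 * (Pf A B - U)) by (unfold Mf; ring).
    replace (A * eps B * Nf A B U) with (A * eps B ^ 2 * (U + kap A ^ 2 / (A * (A + B)))) by (unfold Nf; ring).
    rewrite Hk2, He2. unfold Pf, eNET, eC1, eAB, eD, eS. cbn [ev]. field. lra. }
  assert (ET2 : (A + B) * U + B * kap A * Mf A B U + A * eps B * Nf A B U
     = (3 + A*B)/4 + ev A B PI eNET / (4*(A+B)) + ev B A PI eC1 * (U - 1/2)).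
  { replace (B * kap A * Mf A B U) with (B * kap A ^ 2 * (Pf A B - U)) by (unfold Mf; ring).
    replace (A * eps B * Nf A B U) with (A * eps B ^ 2 * (U + kap A ^ 2 / (A * (A + B)))) by (unfold Nf; ring).
    rewrite Hk2, He2. unfold Pf, eNET, eC1, eAB, eD, eS. cbn [ev]. field. lra. }
  assert (HNETs : 0 <= ev A B PI eNET / (4*(A+B))) by (apply div_nn; lra).
  rewrite ET1, ET2.
  unfold G in HG.
  destruct (Rle_dec (1/2) U) as [Hge|Hlt].
  - set (v := U - 1/2).
    assert (Hcu : cos (PI * U) = - sin (PI * v)).
    { replace (PI * U) with (PI * v + PI/2) by (unfold v; field). apply cos_plus_PI2. }
    rewrite Hcu in HG.
    assert (Hev : 0 <= eps B * (U - 1/2)) by (apply Rmult_le_pos; lra).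
    assert (Hkv : 0 <= kap A * (U - 1/2)) by (apply Rmult_le_pos; lra).
    assert (H1 : cos (PI * Nf A B U) <= cos (PI * N0 A B)).
    { apply cos_le_dec. apply Rmult_le_pos; lra. apply Rmult_le_compat_l; lra.
      rewrite <- (Rmult_1_r PI) at 2. apply Rmult_le_compat_l; lra. }
    assert (H2 : cos (PI * M0 A B) <= cos (PI * Mf A B U)).
    { apply cos_le_dec. apply Rmult_le_pos; lra. apply Rmult_le_compat_l; lra.
      rewrite <- (Rmult_1_r PI) at 2. apply Rmult_le_compat_l; lra. }
    assert (Hk : (A+B) * sin (PI*v) <= A * cos (PI * N0 A B) - B * cos (PI * M0 A B)).
    { assert (E : (A+B) * sin (PI*v) = A * cos (PI * Nf A B U) - B * cos (PI * Mf A B U)) by lra.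
      rewrite E. apply Rplus_le_compat; [apply Rmult_le_compat_l; lra|].
      apply Ropp_le_contravar. apply Rmult_le_compat_l; lra. }
    pose proof (key A B v HA HB Hg ltac:(unfold v; lra) Hk) as Hkey.
    assert (0 <= ev B A PI eC1 * v) by (apply Rmult_le_pos; unfold v; lra).
    split; lra.
  - set (v := 1/2 - U).
    assert (Hcu : cos (PI * U) = sin (PI * v)).
    { replace (PI * U) with (PI/2 - PI * v) by (unfold v; field). apply cos_shift. }
    rewrite Hcu in HG.
    assert (Hev : 0 <= eps B * (1/2 - U)) by (apply Rmult_le_pos; lra).
    assert (Hkv : 0 <= kap A * (1/2 - U)) by (apply Rmult_le_pos; lra).
    assert (H1 : cos (PI * N0 A B) <= cos (PI * Nf A B U)).
    { apply cos_le_dec. apply Rmult_le_pos; lra. apply Rmult_le_compat_l; lra.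
      rewrite <- (Rmult_1_r PI) at 2. apply Rmult_le_compat_l; lra. }
    assert (H2 : cos (PI * Mf A B U) <= cos (PI * M0 A B)).
    { apply cos_le_dec. apply Rmult_le_pos; lra. apply Rmult_le_compat_l; lra.
      rewrite <- (Rmult_1_r PI) at 2. apply Rmult_le_compat_l; lra. }
    assert (Hk : (B+A) * sin (PI*v) <= B * cos (PI * N0 B A) - A * cos (PI * M0 B A)).
    { rewrite (N0_swap A B HA HB), (M0_swap A B HA HB).
      assert (E : (B+A) * sin (PI*v) = B * cos (PI * Mf A B U) - A * cos (PI * Nf A B U)) by lra.
      rewrite E. apply Rplus_le_compat; [apply Rmult_le_compat_l; lra|].
      apply Ropp_le_contravar. apply Rmult_le_compat_l; lra. }
    assert (HgBA : ev B A PI eG <= 0) by (rewrite G_swap; auto).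
    pose proof (key B A v HB HA HgBA ltac:(unfold v; lra) Hk) as Hkey.
    rewrite NET_swap in Hkey.
    replace (4 * (B + A)) with (4 * (A + B)) in Hkey by ring.
    assert (0 <= ev A B PI eC1 * v) by (apply Rmult_le_pos; unfold v; lra).
    replace (U - 1/2) with (- v) by (unfold v; field).
    split; lra.
Qed.
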